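(* If $\varphi \in \mathcal L_\Diamond$ is valid over the class of all dynamical systems, then ${\sf ITL}^0_\Diamond \vdash \varphi$.
   Context: $\mathcal L_\Diamond$ is the language built from a countably infinite set of propositional variables and $\bot$ using $\wedge,\vee,\to$, the modality ${\circ}$ (''next'') and the modality $\Diamond$ (''eventually''); $\neg\varphi$ abbreviates $\varphi\to\bot$. A dynamical (topological) system is a triple $(X,\mathcal T,f)$ with $(X,\mathcal T)$ a topological space and $f\colon X\to X$ continuous. A valuation $\llbracket\cdot\rrbracket$ assigns an open set to each formula with $\llbracket\bot\rrbracket=\varnothing$, $\llbracket\varphi\wedge\psi\rrbracket=\llbracket\varphi\rrbracket\cap\llbracket\psi\rrbracket$, $\llbracket\varphi\vee\psi\rrbracket=\llbracket\varphi\rrbracket\cup\llbracket\psi\rrbracket$, $\llbracket\varphi\to\psi\rrbracket=\big((X\setminus\llbracket\varphi\rrbracket)\cup\llbracket\psi\rrbracket\big)^\circ$ (interior), $\llbracket{\circ}\varphi\rrbracket=f^{-1}\llbracket\varphi\rrbracket$, $\llbracket\Diamond\varphi\rrbracket=\bigcup_{n<\omega}f^{-n}\llbracket\varphi\rrbracket$. A formula is valid over the class of dynamical systems if $\llbracket\varphi\rrbracket=X$ for every dynamical system and every valuation on it. The logic ${\sf ITL}^0_\Diamond$ is the least set of $\mathcal L_\Diamond$-formulas containing all axioms of intuitionistic propositional logic and the axioms $\neg{\circ}\bot$; ${\circ}\varphi\wedge{\circ}\psi\to{\circ}(\varphi\wedge\psi)$; ${\circ}(\varphi\vee\psi)\to{\circ}\varphi\vee{\circ}\psi$;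 ${\circ}(\varphi\to\psi)\to({\circ}\varphi\to{\circ}\psi)$; $\varphi\vee{\circ}\Diamond\varphi\to\Diamond\varphi$, and closed under modus ponens (from $\varphi$ and $\varphi\to\psi$ infer $\psi$), necessitation (from $\varphi$ infer ${\circ}\varphi$), the rule from $\varphi\to\psi$ infer $\Diamond\varphi\to\Diamond\psi$, and the induction rule from ${\circ}\varphi\to\varphi$ infer $\Diamond\varphi\to\varphi$. (Note that the Fischer Servi axiom $({\circ}\varphi\to{\circ}\psi)\to{\circ}(\varphi\to\psi)$ is not included.) *)

(* Defs.v *)
From HB Require Import structures.
From mathcomp Require Import all_boot.
From mathcomp Require Import classical_sets topology.

Set Implicit Arguments.
Unset Strict Implicit.
Unset Printing Implicit Defensive.

Local Open Scope classical_set_scope.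

Inductive form : Type :=
  | Var : nat -> form
  | Bot : form
  | And : form -> form -> form
  | Or  : form -> form -> form
  | Imp : form -> form -> form
  | Next : form -> form
  | Ev : form -> form.

Definition Neg (a : form) : form := Imp a Bot.

(* The intuitionistic propositional axioms are
   given by a standard complete Hilbert-style axiomatization of IPC
   (instantiated with arbitrary L_Diamond formulas), with modus ponens. *)
Inductive prf : form -> Prop :=
  | ax_K  a b : prf (Imp a (Imp b a))
  | ax_S  a b c : prf (Imp (Imp a (Imp b c)) (Imp (Imp a b) (Imp a c)))
  | ax_andE1 a b : prf (Imp (And a b) a)
  | ax_andE2 a b : prf (Imp (And a b) b)
  | ax_andI a b : prf (Imp a (Imp b (And a b)))
  | ax_orI1 a b : prf (Imp a (Or a b))
  | ax_orI2 a b : prf (Imp b (Or a b))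
  | ax_orE a b c : prf (Imp (Imp a c) (Imp (Imp b c) (Imp (Or a b) c)))
  | ax_efq a : prf (Imp Bot a)
  | ax_nextBot : prf (Neg (Next Bot))
  | ax_nextAnd a b : prf (Imp (And (Next a) (Next b)) (Next (And a b)))
  | ax_nextOr a b : prf (Imp (Next (Or a b)) (Or (Next a) (Next b)))
  | ax_nextImp a b : prf (Imp (Next (Imp a b)) (Imp (Next a) (Next b)))
  | ax_evFix a : prf (Imp (Or a (Next (Ev a))) (Ev a))
  | r_mp a b : prf a -> prf (Imp a b) -> prf b
  | r_nec a : prf a -> prf (Next a)
  | r_evMono a b : prf (Imp a b) -> prf (Imp (Ev a) (Ev b))
  | r_ind a : prf (Imp (Next a) a) -> prf (Imp (Ev a) a).

Fixpoint eval (X : topologicalType) (f : X -> X) (V : nat -> set X)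
  (a : form) : set X :=
  match a with
  | Var n => V n
  | Bot => set0
  | And a b => eval f V a `&` eval f V b
  | Or a b => eval f V a `|` eval f V b
  | Imp a b => interior ((~` eval f V a) `|` eval f V b)
  | Next a => f @^-1` eval f V a
  | Ev a => \bigcup_(n in [set: nat]) ((iter n f) @^-1` eval f V a)
  end.

Definition valid (a : form) : Prop :=
  forall (X : topologicalType) (f : X -> X), continuous f ->
  forall V : nat -> set X, (forall n, open (V n)) ->
  eval f V a = setT.

(* Main.v *)
Require Import Defs.
From HB Require Import structures.
From mathcomp Require Import all_boot.
From mathcomp Require Import boolp classical_sets topology.
From mathcomp Require Import zify.
From Stdlib Require Import Lia.

Set Implicit Arguments.
Unset Strict Implicit.
Unset Printing Implicit Defensive.


Fixpoint enc (a : form) : GenTree.tree nat :=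
  match a with
  | Var n => GenTree.Leaf n
  | Bot => GenTree.Node 0 [::]
  | And a b => GenTree.Node 1 [:: enc a; enc b]
  | Or a b => GenTree.Node 2 [:: enc a; enc b]
  | Imp a b => GenTree.Node 3 [:: enc a; enc b]
  | Next a => GenTree.Node 4 [:: enc a]
  | Ev a => GenTree.Node 5 [:: enc a]
  end.

Fixpoint dec (t : GenTree.tree nat) : option form :=
  match t with
  | GenTree.Leaf n => Some (Var n)
  | GenTree.Node 0 [::] => Some Bot
  | GenTree.Node 1 [:: t1; t2] =>
      match dec t1, dec t2 with Some a, Some b => Some (And a b) | _, _ => None end
  | GenTree.Node 2 [:: t1; t2] =>
      match dec t1, dec t2 with Some a, Some b => Some (Or a b) | _, _ => None end
  | GenTree.Node 3 [:: t1; t2] =>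
      match dec t1, dec t2 with Some a, Some b => Some (Imp a b) | _, _ => None end
  | GenTree.Node 4 [:: t1] =>
      match dec t1 with Some a => Some (Next a) | _ => None end
  | GenTree.Node 5 [:: t1] =>
      match dec t1 with Some a => Some (Ev a) | _ => None end
  | _ => None
  end.

Lemma encK : pcancel enc dec.
Proof. by elim=> //= [a -> b ->|a -> b ->|a -> b ->|a ->|a ->]. Qed.

HB.instance Definition _ := Countable.copy form (pcan_type encK).

Definition en (n : nat) : form := odflt Bot (unpickle n).
Lemma en_surj (a : form) : exists n, en n = a.
Proof. by exists (pickle a); rewrite /en pickleK. Qed.

Inductive Cn (G : form -> Prop) : form -> Prop :=
| cn_hyp a : G a -> Cn G a
| cn_thm a : prf a -> Cn G a
| cn_mp a b : Cn G a -> Cn G (Imp a b) -> Cn G b.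

Lemma prf_id a : prf (Imp a a).
Proof.
apply: (r_mp (ax_K a a)).
apply: (r_mp (ax_K a (Imp a a))).
exact: ax_S.
Qed.

Lemma Cn_mono (G H : form -> Prop) a : (forall x, G x -> H x) -> Cn G a -> Cn H a.
Proof.
move=> GH; elim=> [x /GH|x|x y _ IH1 _ IH2]; [exact: cn_hyp|exact: cn_thm|].
exact: cn_mp IH1 IH2.
Qed.

Lemma Cn_K G a b : Cn G a -> Cn G (Imp b a).
Proof. by move=> Ha; apply: cn_mp Ha (cn_thm _ (ax_K _ _)). Qed.

Lemma deduction G a c : Cn (fun x => G x \/ x = a) c -> Cn G (Imp a c).
Proof.
elim=> [x [Gx|->]|x px|x y _ IH1 _ IH2].
- by apply: Cn_K; apply: cn_hyp.
- exact: cn_thm (prf_id _).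
- by apply: Cn_K; apply: cn_thm.
- apply: cn_mp IH1 _.
  apply: cn_mp IH2 _.
  exact: cn_thm (ax_S _ _ _).
Qed.

Lemma Cn_chain (Gs : nat -> form -> Prop) c :
  (forall n m x, (n <= m)%N -> Gs n x -> Gs m x) ->
  Cn (fun x => exists n, Gs n x) c -> exists n, Cn (Gs n) c.
Proof.
move=> mono; elim=> [x [n Hn]|x px|x y _ [n1 H1] _ [n2 H2]].
- by exists n; apply: cn_hyp.
- by exists 0%N; apply: cn_thm.
- exists (maxn n1 n2); apply: cn_mp.
  + by apply: Cn_mono H1 => z; apply: mono; apply: leq_maxl.
  + by apply: Cn_mono H2 => z; apply: mono; apply: leq_maxr.
Qed.

Record PT := MkPT {
  thy :> form -> Prop;
  thy_thm : forall a, prf a -> thy a;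
  thy_mp : forall a b, thy a -> thy (Imp a b) -> thy b;
  thy_prime : forall a b, thy (Or a b) -> thy a \/ thy b;
  thy_cons : ~ thy Bot }.

Lemma Cn_PT (T : PT) a : Cn T a -> T a.
Proof.
elim=> [//|x /thy_thm //|x y _ H1 _ H2]; exact: thy_mp H1 H2.
Qed.

Section Lind.
Variables (G : form -> Prop) (c : form).

Fixpoint Gam (n : nat) : form -> Prop :=
  match n with
  | 0 => G
  | n.+1 => fun x => Gam n x \/ (x = en n /\ ~ Cn (fun y => Gam n y \/ y = en n) c)
  end.

Lemma Gam_mono n m x : (n <= m)%N -> Gam n x -> Gam m x.
Proof.
move=> /subnK <-; elim: (m - n)%N => [//|k IH] /IH Hx /=.
by rewrite ?addSn; left.
Qed.

Definition Theta x := exists n, Gam n x.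

Hypothesis Gc : ~ Cn G c.

Lemma Gam_cons n : ~ Cn (Gam n) c.
Proof.
elim: n => [//|n IH] /= H.
have [nC|C] := pselect (Cn (fun y => Gam n y \/ y = en n) c).
- apply: IH; apply: Cn_mono H => x [//|[_ ]]; by [].
- apply: C; apply: Cn_mono H => x [Hx|[-> _]]; by [left|right].
Qed.

Lemma Theta_cons : ~ Cn Theta c.
Proof.
move=> /(Cn_chain Gam_mono) [n]; exact: Gam_cons.
Qed.

Lemma Theta_closed a : Cn Theta a -> Theta a.
Proof.
move=> Ha; have [n en_a] := en_surj a.
have [nC|C] := pselect (Cn (fun y => Gam n y \/ y = en n) c).
- apply: False_ind; apply: Theta_cons.
  apply: cn_mp Ha _.
  move: nC; rewrite en_a => /deduction.
  by apply: Cn_mono => x Hx; exists n.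
- by exists n.+1; right; split.
Qed.

Lemma Theta_notadded a : ~ Theta a -> Cn (fun y => Theta y \/ y = a) c.
Proof.
move=> Na; have [n en_a] := en_surj a.
apply: contrapT => H; apply: Na; exists n.+1; right; split=> //.
move=> C; apply: H; apply: Cn_mono C => x [Hx|->]; [by left; exists n|by right].
Qed.

Lemma Theta_prime a b : Theta (Or a b) -> Theta a \/ Theta b.
Proof.
move=> Hab; apply: contrapT => /not_orP [Na Nb].
apply: Theta_cons.
have /deduction Ca := Theta_notadded Na.
have /deduction Cb := Theta_notadded Nb.
apply: cn_mp (cn_hyp Hab) _.
apply: cn_mp Cb _; apply: cn_mp Ca _; exact: cn_thm (ax_orE _ _ _).
Qed.

Definition ThetaPT : PT.
Proof.
refine (@MkPT Theta _ _ Theta_prime _).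
- by move=> a pa; apply: Theta_closed; apply: cn_thm.
- by move=> a b Ha Hab; apply: Theta_closed; apply: cn_mp (cn_hyp Ha) (cn_hyp Hab).
- move=> HB; apply: Theta_cons; apply: cn_mp (cn_hyp HB) _; exact: cn_thm (ax_efq _).
Defined.

End Lind.

Lemma lind (G : form -> Prop) c : ~ Cn G c -> exists T : PT, (forall x, G x -> T x) /\ ~ T c.
Proof.
move=> Gc; exists (ThetaPT Gc); split.
- by move=> x Gx; exists 0%N.
- by move=> Hc; apply: (Theta_cons Gc); apply: cn_hyp.
Qed.

Definition subT (T T' : PT) := forall x, T x -> T' x.

Lemma ext_imp (T : PT) a c : ~ T (Imp a c) -> exists T' : PT, subT T T' /\ T' a /\ ~ T' c.
Proof.
move=> N.
have : ~ Cn (fun x => T x \/ x = a) c.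
  by move=> /deduction /Cn_PT.
move=> /lind [T' [H1 H2]]; exists T'; split; last split=> //.
- by move=> x Tx; apply: H1; left.
- by apply: H1; right.
Qed.

Lemma completeness a : (forall T : PT, T a) -> prf a.
Proof.
move=> H; apply: contrapT => N.
have : ~ Cn (fun _ => False) a.
  move=> C; apply: N; elim: C => [//|//|x y _ H1 _ H2]; exact: r_mp H1 H2.
by move=> /lind [T [_ NT]]; apply: NT.
Qed.

Lemma imp_char (T : PT) a b : T (Imp a b) <-> (forall T' : PT, subT T T' -> T' a -> T' b).
Proof.
split.
- by move=> H T' sub Ha; apply: thy_mp Ha (sub _ H).
- move=> H; apply: contrapT => /ext_imp [T' [s [Ha Nb]]]; exact/Nb/H.
Qed.

Lemma prf_imp a b : (forall T : PT, T a -> T b) -> prf (Imp a b).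
Proof.
move=> H; apply: completeness => T; apply/imp_char => T' _; exact: H.
Qed.

Lemma and_char (T : PT) a b : T (And a b) <-> T a /\ T b.
Proof.
split.
- by move=> H; split; apply: thy_mp H _; apply: thy_thm; [exact: ax_andE1|exact: ax_andE2].
- move=> [Ha Hb]; apply: thy_mp Hb _; apply: thy_mp Ha _; apply: thy_thm; exact: ax_andI.
Qed.

Lemma or_char (T : PT) a b : T (Or a b) <-> T a \/ T b.
Proof.
split; first exact: thy_prime.
by move=> [Ha|Hb]; [apply: thy_mp Ha _|apply: thy_mp Hb _]; apply: thy_thm;
  [exact: ax_orI1|exact: ax_orI2].
Qed.


Definition fPT (T : PT) : PT.
Proof.
refine (@MkPT (fun a => T (Next a)) _ _ _ _).
- by move=> a pa; apply: thy_thm; apply: r_nec.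
- move=> a b Ha Hab; apply: thy_mp Ha _; apply: thy_mp Hab _; exact/thy_thm/ax_nextImp.
- by move=> a b H; apply: thy_prime; apply: thy_mp H _; apply/thy_thm/ax_nextOr.
- by move=> H; apply: (@thy_cons T); apply: thy_mp H _; apply/thy_thm/ax_nextBot.
Defined.

Lemma fPT_mono (T T' : PT) : subT T T' -> subT (fPT T) (fPT T').
Proof. by move=> s x; apply: s. Qed.

Lemma ev_intro (T : PT) a : T a \/ T (Next (Ev a)) -> T (Ev a).
Proof. by move=> /or_char H; apply: thy_mp H _; apply/thy_thm/ax_evFix. Qed.

Lemma ev_ind a c : (forall T : PT, T a -> T c) -> (forall T : PT, T (Next c) -> T c) ->
  forall T : PT, T (Ev a) -> T c.
Proof.
move=> H1 H2 T He.
have p1 := r_evMono (prf_imp H1).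
have p2 := r_ind (prf_imp H2).
by apply: thy_mp (thy_mp He (thy_thm T p1)) (thy_thm T p2).
Qed.

Lemma ev_unfold (T : PT) a : T (Ev a) -> T a \/ T (Next (Ev a)).
Proof.
move=> He; apply/or_char; move: T He; apply: ev_ind => T.
- by move=> Ha; apply/or_char; left.
- move=> /= H; have /or_char [Ha|Hn] : fPT T (Or a (Next (Ev a))) by [].
  + by apply/or_char; right; apply: (@ev_intro (fPT T)); left.
  + by apply/or_char; right; apply: (@ev_intro (fPT T)); right.
Qed.

Definition Top := Imp Bot Bot.
Definition bigAnd (l : seq form) := foldr And Top l.
Definition bigOr (l : seq form) := foldr Or Bot l.

Lemma bigAnd_char (T : PT) l : T (bigAnd l) <-> (forall x, x \in l -> T x).
Proof.
elim: l => [|y l IH] /=.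
- by split=> // _; apply/thy_thm/prf_id.
- rewrite and_char IH; split=> [[Hy Hl] x|H].
  + by rewrite inE => /orP [/eqP ->|/Hl].
  + by split=> [|x xl]; apply: H; rewrite inE ?eqxx ?xl ?orbT.
Qed.

Lemma bigOr_char (T : PT) l : T (bigOr l) <-> (exists2 x, x \in l & T x).
Proof.
elim: l => [|y l IH] /=.
- by split=> [/thy_cons //|[]].
- rewrite or_char IH; split=> [[Hy|[x xl Tx]]|[x]].
  + by exists y; rewrite ?inE ?eqxx.
  + by exists x; rewrite // inE xl orbT.
  + by rewrite inE => /orP [/eqP ->|xl Tx]; [left|right; exists x].
Qed.

Fixpoint subseqs (s : seq form) : seq (seq form) :=
  match s with
  | [::] => [:: [::]]
  | x :: s' => [seq x :: l | l <- subseqs s'] ++ subseqs s'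
  end.

Lemma filter_subseqs (p : pred form) s : [seq x <- s | p x] \in subseqs s.
Proof.
elim: s => [|x s IH] /=; first by rewrite inE.
by case: (p x); rewrite mem_cat ?IH ?orbT // map_f.
Qed.

Section Moments.
Variable S : seq form.

Definition mom := ((seq form * seq form) * seq form)%type.
Definition dform (m : mom) := Imp (bigAnd m.1.1) (bigOr (m.1.2 ++ m.2)).
Definition realizes (T : PT) (m : mom) :=
  (forall x, x \in m.1.1 -> T x) /\ (forall x, x \in m.1.2 ++ m.2 -> ~ T x).

Fixpoint upList (n : nat) : seq mom :=
  match n with
  | 0 => [::]
  | n.+1 => upList n ++ [seq (pn, L) | pn <- [seq (p, ng) | p <- subseqs S, ng <- subseqs S],
                                       L <- subseqs (map dform (upList n))]
  end.

Lemma upList_in n p ng L : p \in subseqs S -> ng \in subseqs S ->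
  L \in subseqs (map dform (upList n)) -> (p, ng, L) \in upList n.+1.
Proof.
move=> Hp Hng HL /=; rewrite mem_cat; apply/orP; right.
apply: (allpairs_f (fun pn L => (pn, L))) => //.
exact: (allpairs_f (fun p ng => (p, ng))).
Qed.

Lemma upList_mono m n x : (m <= n)%N -> x \in upList m -> x \in upList n.
Proof.
move=> /subnK <-; elim: (n - m)%N => [//|k IH] /IH H.
by rewrite addSn /= mem_cat H.
Qed.

Definition pos (T : PT) := [seq s <- S | `[< T s >]].
Definition neg (T : PT) := [seq s <- S | `[< ~ T s >]].
Definition sz (T : PT) := size (pos T).

Lemma sz_le T : (sz T <= size S)%N.
Proof. by rewrite /sz size_filter count_size. Qed.

Definition mu (T : PT) : mom :=
  (pos T, neg T, [seq d <- map dform (upList (size S - sz T)) | `[< ~ T d >]]).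

Definition sim (a b : PT) :=
  (forall s, s \in S -> (a s <-> b s)) /\
  (forall d, d \in map dform (upList (size S - sz b)) -> a d -> b d).

Lemma mu_in T : mu T \in upList (size S - sz T).+1.
Proof. by apply: upList_in; apply: filter_subseqs. Qed.

Lemma mu_all T : mu T \in upList (size S).+1.
Proof. by apply: upList_mono (mu_in T); lia. Qed.

Lemma realizes_mu T : realizes T (mu T).
Proof.
split=> [x|x]; first by rewrite mem_filter => /andP [/asboolP].
by rewrite mem_cat !mem_filter => /orP [] /andP [/asboolP].
Qed.

Lemma sz_eq (a b : PT) : (forall s, s \in S -> (a s <-> b s)) -> sz a = sz b.
Proof.
move=> H; rewrite /sz /pos; congr size; apply: eq_in_filter => x /H E.
exact: asbool_equiv_eq.
Qed.

Lemma realizes_mu_sim T' T : realizes T' (mu T) -> sim T' T.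
Proof.
move=> [Hp Hn].
have Ht : forall s, s \in S -> (T' s <-> T s).
  move=> s sS; split=> H.
  - apply: contrapT => NT; apply: (Hn s) H.
    by rewrite mem_cat mem_filter sS andbT; apply/orP; left; apply/asboolP.
  - by apply: Hp; rewrite mem_filter sS andbT; apply/asboolP.
split=> // d dU Hd; apply: contrapT => NT; apply: (Hn d) Hd.
rewrite mem_cat; apply/orP; right; rewrite mem_filter dU andbT; exact/asboolP.
Qed.

Lemma realizes_not T m : realizes T m -> ~ T (dform m).
Proof.
move=> [Hp Hn] H.
have /bigOr_char [x xl Tx] := thy_mp (proj2 (bigAnd_char T _) Hp) H.
exact: Hn xl Tx.
Qed.

Lemma ext_mom (T : PT) m : ~ T (dform m) -> exists T' : PT, subT T T' /\ realizes T' m.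
Proof.
move=> /ext_imp [T' [s [Ha Nc]]]; exists T'; split=> //; split.
- by apply/bigAnd_char.
- by move=> x xl Tx; apply: Nc; apply/bigOr_char; exists x.
Qed.

Lemma sim_refl T : sim T T.
Proof. by split. Qed.

Lemma sim_trans a b c : sim a b -> sim b c -> sim a c.
Proof.
move=> [t1 d1] [t2 d2]; split.
- by move=> s sS; rewrite (t1 s sS) (t2 s sS).
- move=> d dU Hd; apply: d2 (dU) _; apply: d1 Hd.
  by rewrite (sz_eq t2).
Qed.

Lemma count_lt_helper (P Q : form -> Prop) (l : seq form) s0 :
  (forall x, P x -> Q x) -> s0 \in l -> Q s0 -> ~ P s0 ->
  (count (fun x => `[< P x >]) l < count (fun x => `[< Q x >]) l)%N.
Proof.
move=> sub; elim: l => [//|x l IH] /=; rewrite inE => /orP [/eqP <-|xl] H1 H2.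
- have -> : `[< P s0 >] = false by apply/asboolPn.
  have -> : `[< Q s0 >] = true by apply/asboolP.
  rewrite add0n add1n ltnS.
  by apply: sub_count => y /asboolP /sub /asboolP.
- have := IH xl H1 H2.
  case: (asboolP (P x)) => bx; case: (asboolP (Q x)) => b'x //=;
    rewrite ?add1n ?add0n ?ltnS //.
  + by exfalso; apply: b'x; apply: sub.
  + move=> h; exact: ltnW.
Qed.

Lemma sz_lt (b b' : PT) : subT b b' -> (exists2 s, s \in S & b' s /\ ~ b s) ->
  (sz b < sz b')%N.
Proof.
move=> sub [s0 s0S [H1 H2]]; rewrite /sz /pos !size_filter.
exact: count_lt_helper s0S H1 H2.
Qed.

Lemma zig (a b b' : PT) : sim a b -> subT b b' -> exists a' : PT, subT a a' /\ sim a' b'.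
Proof.
move=> [t d] sub.
have [same|diff] := pselect (forall s, s \in S -> b' s -> b s).
- exists a; split=> //.
  have tb : forall s, s \in S -> (b s <-> b' s).
    by move=> s sS; split=> [/sub|/same]; [|apply].
  split.
  + by move=> s sS; rewrite (t s sS) (tb s sS).
  + move=> x; rewrite -(sz_eq tb) => xU Hx; exact/sub/d.
- have [s0 s0S H0] : exists2 s, s \in S & b' s /\ ~ b s.
    apply: contrapT => N; apply: diff => s sS Hs; apply: contrapT => Nb.
    by apply: N; exists s.
  have lt := sz_lt sub (ex_intro2 _ _ s0 s0S H0).
  have le := sz_le b'.
  have Hin : dform (mu b') \in map dform (upList (size S - sz b)).
    apply: map_f; apply: upList_mono (mu_in b'); lia.
  have Na : ~ a (dform (mu b')).
    by move=> /(d _ Hin) /sub; apply: realizes_not; apply: realizes_mu.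
  have [a' [sa' ra']] := ext_mom Na.
  by exists a'; split=> //; apply: realizes_mu_sim.
Qed.

Definition R (a w : PT) := exists z, sim z a /\ sim w (fPT z).

Lemma R_f T : R T (fPT T).
Proof. by exists T; split; apply: sim_refl. Qed.

End Moments.


Section Paths.
Variable S : seq form.
Hypothesis closedEv : forall a, Ev a \in S -> a \in S.

Notation R := (R S).
Notation sim := (sim S).

Inductive reach (al : form) : PT -> Prop :=
| reach0 (T : PT) : T al -> reach al T
| reachS (T w : PT) : R T w -> reach al w -> reach al T.

Lemma reach_sim al (T' T : PT) : al \in S -> sim T' T -> reach al T' -> reach al T.
Proof.
move=> alS st H; move: H st; case=> [U HU|U w [z [sz1 sz2]] rw] st.
- by apply: reach0; apply/(proj1 st al alS).
- apply: (@reachS _ T w) => //; exists z; split=> //; exact: sim_trans st.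
Qed.

Lemma F1 al (T : PT) : al \in S -> T (Ev al) -> reach al T.
Proof.
move=> alS He; apply: contrapT => NR.
pose B := [seq m <- upList S (size S).+1 |
            `[< forall T' : PT, realizes T' m -> ~ reach al T' >]].
pose b := bigAnd (map dform B).
have Bchar : forall m, m \in B -> forall T' : PT, realizes T' m -> ~ reach al T'.
  by move=> m; rewrite mem_filter => /andP [/asboolP].
have C1 : forall U : PT, U al -> U b.
  move=> U Ua; apply/bigAnd_char => x /mapP [m mB ->].
  apply: contrapT => /ext_mom [U' [sU rU]].
  by apply: (Bchar m mB U' rU); apply: reach0; apply: sU.
have C2 : forall U : PT, U (Next b) -> U b.
  move=> U Ub; apply/bigAnd_char => x /mapP [m mB ->].
  apply: contrapT => /ext_mom [U' [sU rU]].
  have fb : fPT U' b by apply: sU.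
  have m'B : mu S (fPT U') \in B.
    rewrite mem_filter mu_all andbT; apply/asboolP => T'' r'' rT''.
    apply: (Bchar m mB U' rU); apply: (@reachS _ U' T'') => //.
    exists U'; split; [exact: sim_refl|exact: realizes_mu_sim].
  have := proj1 (bigAnd_char _ _) fb (dform (mu S (fPT U'))) (map_f _ m'B).
  exact: realizes_not (realizes_mu S (fPT U')).
have Tb := ev_ind C1 C2 He.
have m0B : mu S T \in B.
  rewrite mem_filter mu_all andbT; apply/asboolP => T' rT' reT'.
  apply: NR; apply: reach_sim alS _ reT'; exact: realizes_mu_sim.
have := proj1 (bigAnd_char _ _) Tb (dform (mu S T)) (map_f _ m0B).
exact: realizes_not (realizes_mu S T).
Qed.

Lemma persist (a w : PT) be : Ev be \in S -> be \in S -> R a w -> a (Ev be) -> ~ a be ->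
  w (Ev be).
Proof.
move=> eS bS [z [s1 s2]] ae nab.
have ze : z (Ev be) by apply/(proj1 s1 _ eS).
have nzb : ~ z be by move/(proj1 s1 _ bS).
have [//|zn] := ev_unfold ze.
by apply/(proj1 s2 _ eS).
Qed.

Lemma backprop (a w : PT) be : Ev be \in S -> R a w -> w (Ev be) -> a (Ev be).
Proof.
move=> eS [z [s1 s2]] we.
have : fPT z (Ev be) by apply/(proj1 s2 _ eS).
move=> zn; have ze : z (Ev be) by apply: ev_intro; right.
by apply/(proj1 s1 _ eS).
Qed.

Fixpoint chain (x : PT) (l : seq PT) : Prop :=
  match l with
  | [::] => True
  | y :: l' => R x y /\ chain y l'
  end.

Lemma chain_cat x l1 l2 : chain x l1 -> chain (last x l1) l2 -> chain x (l1 ++ l2).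
Proof. by elim: l1 x => [//|y l IH] x /= [Rxy cy] c2; split=> //; apply: IH. Qed.

Definition exP (P : PT -> Prop) (x : PT) (l : seq PT) :=
  exists k, (k <= size l)%N /\ P (nth x (x :: l) k).

Lemma persist_chain x l be : Ev be \in S -> be \in S -> chain x l -> x (Ev be) ->
  exP (fun u => u be) x l \/ (last x l) (Ev be).
Proof.
move=> eS bS; elim: l x => [|y l IH] x /=; first by move=> _ H; right.
move=> [Rxy cy] xe.
have [xb|nxb] := pselect (x be); first by left; exists 0%N.
have ye := persist eS bS Rxy xe nxb.
have [[k [kl Pk]]|H] := IH y cy ye; last by right.
left; exists k.+1; split=> //=.
by rewrite (set_nth_default y) //= ltnS.
Qed.

Lemma reach_list al (T : PT) : reach al T -> exists l, chain T l /\ (last T l) al.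
Proof.
elim=> [U HU|U w Rw _ [l [cl Hl]]]; first by exists [::].
by exists (w :: l).
Qed.

Lemma exP_cat P x l1 l2 : exP P x l1 \/ exP P (last x l1) l2 -> exP P x (l1 ++ l2).
Proof.
move=> [[k [kl Pk]]|[k [kl Pk]]].
- exists k; split; first by rewrite size_cat; lia.
  by rewrite -cat_cons nth_cat /= ltnS kl.
- case: k kl Pk => [|k] kl Pk.
  + exists (size l1); split; first by rewrite size_cat; lia.
    rewrite -cat_cons nth_cat /= ltnSn.
    by have := @nth_last _ x (x :: l1); rewrite /= => ->.
  + exists (size l1 + k.+1)%N; split; first by rewrite size_cat /= in kl *; lia.
    rewrite -cat_cons nth_cat /=.
    have -> : (size l1 + k.+1 < (size l1).+1)%N = false by lia.
    have -> : (size l1 + k.+1 - (size l1).+1 = k)%N by lia.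
    by rewrite (set_nth_default (last x l1)) //=; rewrite /= in kl.
Qed.

Lemma Fall (E : seq form) : (forall e, e \in E -> e \in S) -> forall w : PT,
  exists l, l <> [::] /\ chain w l /\
    forall be, Ev be \in E -> w (Ev be) -> exP (fun u => u be) w l.
Proof.
elim: E => [_|e E IH ES] w.
  by exists [:: fPT w]; split=> //; split=> //=; split=> //; exact: R_f.
have ES' : forall x, x \in E -> x \in S by move=> x xE; apply: ES; rewrite inE xE orbT.
have eS : e \in S by apply: ES; rewrite inE eqxx.
have [[al [Ee we]]|No] := pselect (exists al, e = Ev al /\ w (Ev al)).
- subst e; have alS := closedEv eS.
  have [l1 [c1 h1]] := reach_list (F1 alS we).
  have [l2 [n2 [c2 h2]]] := IH ES' (last w l1).
  exists (l1 ++ l2); split; first by move=> H; apply: n2; move: H; case: (l1) => //=.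
  split; first exact: chain_cat.
  move=> be; rewrite inE => /orP [/eqP [->] _|beE wbe].
  + apply: exP_cat; right; exists 0%N; split=> //.
  + apply: exP_cat.
    have [P1|P2] := persist_chain (ES' _ beE) (closedEv (ES' _ beE)) c1 wbe.
    * by left.
    * by right; apply: h2.
- have [l [nl [cl hl]]] := IH ES' w.
  exists l; split=> //; split=> // be; rewrite inE => /orP [/eqP Hbe|beE] wbe.
  + by exfalso; apply: No; exists be; split.
  + exact: hl.
Qed.

End Paths.


Section Walk.
Variable S : seq form.
Hypothesis closedEv : forall a, Ev a \in S -> a \in S.

Notation R := (R S).
Notation chain := (chain S).

Definition gseq (w : PT) : seq PT :=
  projT1 (cid (@Fall S closedEv S (fun e h => h) w)).

Lemma gseq_spec w : gseq w <> [::] /\ chain w (gseq w) /\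
    forall be, Ev be \in S -> w (Ev be) -> exP (fun u => u be) w (gseq w).
Proof. rewrite /gseq; case: cid => l /= H; exact: H. Qed.

Variable T0 : PT.

Fixpoint walk (n : nat) : PT * seq PT :=
  match n with
  | 0 => (T0, [::])
  | n'.+1 =>
      let wr := walk n' in
      match wr.2 with
      | [::] => (head wr.1 (gseq wr.1), behead (gseq wr.1))
      | z :: r' => (z, r')
      end
  end.

Definition xs n := (walk n).1.

Lemma walk_chain n : chain (xs n) (walk n).2.
Proof.
elim: n => [//|n IH]; rewrite /xs /=.
case E: (walk n).2 => [|z r] /=.
- have [ne [cg _]] := gseq_spec (walk n).1.
  by case: (gseq (walk n).1) ne cg => [//|y g] _ /= [].
- by rewrite /xs E in IH; case: IH.
Qed.

Lemma walk_R n : R (xs n) (xs n.+1).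
Proof.
have IH := walk_chain n; rewrite /xs /= in IH *.
case E: (walk n).2 => [|z r] /=.
- have [ne [cg _]] := gseq_spec (walk n).1.
  by case: (gseq (walk n).1) ne cg => [//|y g] _ /= [].
- by rewrite E in IH; case: IH.
Qed.

Lemma walk_drop n k : (k <= size (walk n).2)%N ->
  walk (n + k) = (nth (xs n) (xs n :: (walk n).2) k, drop k (walk n).2).
Proof.
elim: k => [_|k IH lt]; first by rewrite addn0 drop0 /xs; case: (walk n).
rewrite addnS /= IH; last by lia.
rewrite /= (drop_nth (xs n)); last by lia.
by [].
Qed.

Lemma walk_fresh m : (walk m).2 = [::] -> forall k, (k < size (gseq (xs m)))%N ->
  xs (m + k.+1) = nth (xs m) (gseq (xs m)) k.
Proof.
move=> E k lt.
have W1 : walk m.+1 = (head (xs m) (gseq (xs m)), behead (gseq (xs m))).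
  by rewrite /= E.
have H : walk (m.+1 + k) =
    (nth (xs m.+1) (xs m.+1 :: (walk m.+1).2) k, drop k (walk m.+1).2).
  by apply: walk_drop; rewrite W1 /= size_behead; lia.
rewrite /xs addnS -addSn H /xs W1 /=.
rewrite -/(xs m); case: (gseq (xs m)) lt => [//|y g] lt'; exact: set_nth_default lt'.
Qed.

Lemma walk_honest i be : Ev be \in S -> xs i (Ev be) -> exists j, (i <= j)%N /\ xs j be.
Proof.
move=> eS xe.
have bS := closedEv eS.
have [[k [kl Pk]]|H] := persist_chain eS bS (walk_chain i) xe.
- exists (i + k)%N; split; first by lia.
  by rewrite /xs walk_drop.
- set r := (walk i).2 in H.
  have Wm : walk (i + size r) = (last (xs i) r, [::]).
    rewrite walk_drop // drop_size.
    by have := @nth_last _ (xs i) (xs i :: r); rewrite /= => ->.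
  have xm : xs (i + size r) (Ev be) by rewrite /xs Wm.
  have [_ [_ ful]] := gseq_spec (xs (i + size r)).
  have [[|k] [kl Pk]] := ful be eS xm.
  + by exists (i + size r)%N; split; first lia.
  + exists (i + size r + k.+1)%N; split; first lia.
    rewrite walk_fresh; first by rewrite /= in Pk.
    * by rewrite Wm.
    * by rewrite /= in kl.
Qed.

Lemma xs0 : xs 0 = T0.
Proof. by []. Qed.

End Walk.


Local Open Scope classical_set_scope.

Definition Rpath (S : seq form) (x : nat -> PT) := forall i, R S (x i) (x i.+1).
Definition honest (S : seq form) (x : nat -> PT) :=
  forall i a, Ev a \in S -> x i (Ev a) -> exists j, (i <= j)%N /\ x j a.
Definition good S x := Rpath S x /\ honest S x.

Definition Pt (S : seq form) := {x : nat -> PT | good S x}.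

HB.instance Definition _ (S : seq form) := gen_eqMixin (Pt S).
HB.instance Definition _ (S : seq form) := gen_choiceMixin (Pt S).

Definition opP (S : seq form) (U : set (Pt S)) :=
  forall x, U x -> exists N, forall y : Pt S,
    (forall i, (i < N)%N -> subT (proj1_sig x i) (proj1_sig y i)) -> U y.

Lemma opP_T S : opP (@setT (Pt S)).
Proof. by move=> x _; exists 0%N. Qed.

Lemma opP_I S : setI_closed (@opP S).
Proof.
move=> A B oA oB x [Ax Bx].
have [N1 H1] := oA x Ax; have [N2 H2] := oB x Bx.
exists (maxn N1 N2) => y Hy; split.
- by apply: H1 => i lt; apply: Hy; lia.
- by apply: H2 => i lt; apply: Hy; lia.
Qed.

Lemma opP_U S (I : Type) (f : I -> set (Pt S)) : (forall i, opP (f i)) -> opP (\bigcup_i f i).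
Proof.
move=> H x [i _ fx]; have [N HN] := H i x fx.
by exists N => y Hy; exists i => //; apply: HN.
Qed.

HB.instance Definition _ (S : seq form) :=
  isOpenTopological.Build (Pt S) (@opP_T S) (@opP_I S) (@opP_U S).

Lemma openP S (U : set (Pt S)) : open U <-> opP U.
Proof. by []. Qed.

Lemma interiorP S (U : set (Pt S)) x : interior U x <-> exists B, [/\ opP B, B x & B `<=` U].
Proof. by []. Qed.

Local Close Scope classical_set_scope.
Fixpoint sub (a : form) : seq form :=
  a :: match a with
       | And b c | Or b c | Imp b c => sub b ++ sub c
       | Next b | Ev b => sub b
       | _ => [::]
       end.

Lemma sub_refl a : a \in sub a.
Proof. by case: a => *; rewrite inE eqxx. Qed.

Lemma sub_trans a b c : b \in sub a -> c \in sub b -> c \in sub a.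
Proof.
elim: a => [n||b1 IH1 b2 IH2|b1 IH1 b2 IH2|b1 IH1 b2 IH2|b1 IH|b1 IH] Hb Hc;
  rewrite [sub _]/= in_cons in Hb; case/orP: Hb => [/eqP Eb|H];
  try (by rewrite Eb in Hc); rewrite /= inE ?mem_cat in H *; try by [].
- by case/orP: H => H; [rewrite (IH1 H Hc)|rewrite (IH2 H Hc)]; rewrite !orbT.
- by case/orP: H => H; [rewrite (IH1 H Hc)|rewrite (IH2 H Hc)]; rewrite !orbT.
- by case/orP: H => H; [rewrite (IH1 H Hc)|rewrite (IH2 H Hc)]; rewrite !orbT.
- by rewrite (IH H Hc) orbT.
- by rewrite (IH H Hc) orbT.
Qed.

Local Open Scope classical_set_scope.
Section Model.
Variable phi : form.
Notation S := (sub phi).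

Lemma subS a b : a \in S -> b \in sub a -> b \in S.
Proof. by move=> aS bA; apply: sub_trans aS bA. Qed.

Lemma closedEv : forall a, Ev a \in S -> a \in S.
Proof. by move=> a H; apply: subS H _; rewrite /= in_cons sub_refl orbT. Qed.

Notation X := (Pt S).

Definition shiftf (x : nat -> PT) := fun i => x i.+1.

Lemma good_shift x : good S x -> good S (shiftf x).
Proof.
move=> [Rp Ho]; split; first by move=> i; apply: Rp.
move=> i a aS xe; have [j [ij xj]] := Ho i.+1 a aS xe.
case: j ij xj => [//|j] ij xj; exists j; split=> //.
Qed.

Definition shift (x : X) : X := exist _ (shiftf (proj1_sig x)) (good_shift (proj2_sig x)).

Lemma iter_shift n (x : X) i : proj1_sig (iter n shift x) i = proj1_sig x (n + i)%N.
Proof.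
elim: n x i => [//|n IH] x i /=.
by rewrite /shiftf IH addSnnS.
Qed.

Lemma shift_cont : continuous shift.
Proof.
apply/continuousP => A /openP oA; apply/openP => x Ax.
have [N HN] := oA (shift x) Ax.
exists N.+1 => y Hy; apply: HN => i lt; apply: Hy; lia.
Qed.

Definition V (n : nat) : set X := [set x : X | proj1_sig x 0 (Var n)].

Lemma V_open n : open (V n).
Proof.
apply/openP => x Vx; exists 1%N => y Hy; exact: (Hy 0%N).
Qed.

Lemma extend_fin (x : X) (T1 : PT) : subT (proj1_sig x 0) T1 -> forall N,
  exists y : nat -> PT, y 0 = T1 /\ (forall i, (i <= N)%N -> subT (proj1_sig x i) (y i)) /\
    (forall i, (i < N)%N -> R S (y i) (y i.+1)).
Proof.
move=> s0; elim=> [|N [y [y0 [ys yR]]]].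
  exists (fun _ => T1); split=> //; split=> // i; rewrite leqn0 => /eqP -> //.
have [z [sz1 sz2]] := (proj1 (proj2_sig x)) N.
have [z' [zz' sz']] := zig sz1 (ys N (leqnn N)).
have [y' [xy' sy']] := zig sz2 (fPT_mono zz').
exists (fun i => if (i <= N)%N then y i else y'); split=> //; split.
- move=> i; case: ifP => [iN _|iN iN1]; first exact: ys.
  have -> : i = N.+1 by lia.
  exact: xy'.
- move=> i lt; case: ifP => iN; last by lia.
  case: ifP => iN1; first by apply: yR; lia.
  have -> : i = N by lia.
  by exists z'.
Qed.

Lemma persist_seg (y : nat -> PT) N i a : Ev a \in S ->
  (forall j, (j < N)%N -> R S (y j) (y j.+1)) -> (i <= N)%N -> y i (Ev a) ->
  (exists j, [/\ (i <= j)%N, (j <= N)%N & y j a]) \/ y N (Ev a).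
Proof.
move=> eS yR iN ye.
suff H : forall k, (i + k <= N)%N ->
    (exists j, [/\ (i <= j)%N, (j <= N)%N & y j a]) \/ y (i + k)%N (Ev a).
  by have := H (N - i)%N; rewrite subnKC //; apply.
elim=> [_|k IH le]; first by right; rewrite addn0.
have [[j [ij jN yj]]|ye'] := IH (ltac:(lia)); first by left; exists j.
have [ya|nya] := pselect (y (i + k)%N a).
  by left; exists (i + k)%N; split=> //; lia.
right; rewrite addnS; apply: persist eS (closedEv eS) _ ye' nya.
by apply: yR; lia.
Qed.

Lemma extend (x : X) (T1 : PT) N : subT (proj1_sig x 0) T1 ->
  exists y : X, proj1_sig y 0 = T1 /\ forall i, (i < N)%N -> subT (proj1_sig x i) (proj1_sig y i).
Proof.
move=> s0; have [y [y0 [ys yR]]] := extend_fin s0 N.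
pose w := xs closedEv (y N).
have wR : forall i, R S (w i) (w i.+1) by move=> i; apply: walk_R.
have wH : forall i a, Ev a \in S -> w i (Ev a) -> exists j, (i <= j)%N /\ w j a.
  by move=> i a aS; apply: walk_honest.
pose p i := if (i <= N)%N then y i else w (i - N)%N.
have pge : forall i, (N <= i)%N -> p i = w (i - N)%N.
  move=> i Ni; rewrite /p; case: ifP => iN //.
  have -> : i = N by lia.
  by rewrite subnn.
have gp : good S p.
  split.
  - move=> i; have [iN|Ni] := ltnP i N.
    + by rewrite /p (ltnW iN) iN; apply: yR.
    + rewrite !pge //; last by lia.
      by have -> : (i.+1 - N = (i - N).+1)%N by lia.
  - move=> i a eS pe; have [iN|Ni] := leqP i N.
    + rewrite /p iN in pe.
      have [[j [ij jN yj]]|yNe] := persist_seg eS yR iN pe.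
      * by exists j; split=> //; rewrite /p jN.
      * have [j [_ wj]] := wH 0%N a eS yNe.
        exists (N + j)%N; split; first by lia.
        by rewrite pge ?leq_addr // addKn.
    + rewrite pge in pe; last by lia.
      have [j [ij wj]] := wH _ a eS pe.
      exists (N + j)%N; split; first by lia.
      by rewrite pge ?leq_addr // addKn.
exists (exist _ p gp); split=> /=; first by rewrite /p leq0n.
by move=> i iN; rewrite /p ltnW //; apply: ys; lia.
Qed.

Lemma backprop_n (x : X) a n : Ev a \in S -> proj1_sig x n (Ev a) -> proj1_sig x 0 (Ev a).
Proof.
move=> eS; elim: n => [//|n IH] H; apply: IH.
exact: backprop eS ((proj1 (proj2_sig x)) n) H.
Qed.

Lemma truth a : a \in S -> forall x : X, Defs.eval shift V a x <-> proj1_sig x 0 a.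
Proof.
elim: a => [n||b IHb c IHc|b IHb c IHc|b IHb c IHc|b IH|b IH] aS x /=.
- by [].
- by split=> // /thy_cons.
- have bS : b \in S by apply: subS aS _; rewrite /= in_cons mem_cat sub_refl orbT.
  have cS : c \in S by apply: subS aS _; rewrite /= in_cons mem_cat sub_refl !orbT.
  by rewrite and_char -(IHb bS) -(IHc cS).
- have bS : b \in S by apply: subS aS _; rewrite /= in_cons mem_cat sub_refl orbT.
  have cS : c \in S by apply: subS aS _; rewrite /= in_cons mem_cat sub_refl !orbT.
  by rewrite or_char -(IHb bS) -(IHc cS).
- have bS : b \in S by apply: subS aS _; rewrite /= in_cons mem_cat sub_refl orbT.
  have cS : c \in S by apply: subS aS _; rewrite /= in_cons mem_cat sub_refl !orbT.
  rewrite interiorP; split.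
  + move=> [B [oB Bx sB]]; apply: contrapT => Nimp.
    have [T1 [s1 [T1b NT1c]]] := ext_imp Nimp.
    have [N HN] := oB x Bx.
    have [y [y0 ys]] := extend N s1.
    have By := HN y ys.
    have [] := sB y By.
    * by apply; apply/(IHb bS); rewrite y0.
    * by move=> /(IHc cS); rewrite y0.
  + move=> Himp; exists [set y : X | proj1_sig y 0 (Imp b c)]; split=> //.
    * move=> y yB; exists 1%N => z Hz; exact: (Hz 0%N).
    * move=> y /= yI.
      have [eb|neb] := pselect (Defs.eval shift V b y); [right|by left].
      by apply/(IHc cS); apply: thy_mp yI; apply/(IHb bS).
- have bS : b \in S by apply: subS aS _; rewrite /= in_cons sub_refl orbT.
  rewrite (IH bS (shift x)) /=.
  have [z [s1 s2]] := (proj1 (proj2_sig x)) 0%N.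
  rewrite /shiftf (proj1 s2 b bS) -(proj1 s1 _ aS).
  by [].
- have bS : b \in S by apply: subS aS _; rewrite /= in_cons sub_refl orbT.
  split.
  + move=> [n _ Hn]; have := (IH bS (iter n shift x)).1 Hn.
    rewrite iter_shift addn0 => xb.
    by apply: backprop_n aS (ev_intro (or_introl xb)).
  + move=> xe; have [j [_ xj]] := (proj2 (proj2_sig x)) 0%N b aS xe.
    exists j => //; apply/(IH bS); by rewrite iter_shift addn0.
Qed.

End Model.

Theorem theorem8p4 (phi : form) : valid phi -> prf phi.
Proof.
move=> Hv; apply: completeness => T; apply: contrapT => NT.
pose x0 := xs (@closedEv phi) T.
have g : good (sub phi) x0.
  split; first by move=> i; apply: walk_R.
  by move=> i a aS; apply: walk_honest.
pose x : Pt (sub phi) := exist _ x0 g.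
have := Hv (Pt (sub phi)) (@shift phi) (@shift_cont phi) (@V phi) (@V_open phi).
move=> E.
have : Defs.eval (@shift phi) (@V phi) phi x by rewrite E.
by move=> /(truth (sub_refl phi)).
Qed.
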